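(* Let $\hat K$ be the triangle with vertices $(0,0),(1,0),(0,1)$, $\hat b=\hat x_1\hat x_2(1-\hat x_1-\hat x_2)$, and $j\ge1$. If $\hat\tau=\hat b\,p$ with $p\in P_j^{hom}(\hat K;\mathbb{S})$ and $\widehat{\mathrm{div}}\,\hat\tau=0$ on $\hat K$, then $\hat\tau=0$.
   Context: $\mathbb{S}$ is the space of real symmetric $2\times2$ matrices; $P_j^{hom}(\hat K;\mathbb{S})$ denotes $\mathbb{S}$-valued polynomials that are homogeneous of degree $j$ in $(\hat x_1,\hat x_2)$; the divergence of a matrix field is taken row-wise. *)

(* Defs.v *)
From HB Require Import structures.
From mathcomp Require Import all_boot all_order all_algebra.
From mathcomp Require Import reals.
From mathcomp Require Import mpoly.
Set Implicit Arguments. Unset Strict Implicit. Unset Printing Implicit Defensive.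
Import Order.TTheory GRing.Theory Num.Theory.
Local Open Scope ring_scope.

Definition bubble (R : realType) : {mpoly R[2]} :=
  'X_(0 : 'I_2) * 'X_(1 : 'I_2) * (1 - 'X_(0 : 'I_2) - 'X_(1 : 'I_2)).

Definition in_ref_triangle (R : realType) (x : 'I_2 -> R) : Prop :=
  0 <= x 0 /\ 0 <= x 1 /\ x 0 + x 1 <= 1.

Definition mxdiv (R : realType) (tau : 'M[{mpoly R[2]}]_2) (i : 'I_2)
  : {mpoly R[2]} := \sum_(k < 2) (tau i k)^`M(k).

(* Main.v *)
Require Import Defs.
From HB Require Import structures.
From mathcomp Require Import all_boot all_order all_algebra.
From mathcomp Require Import reals.
From mathcomp Require Import mpoly.
From mathcomp Require Import ring lra zify.
Import Order.TTheory GRing.Theory Num.Theory.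
Local Open Scope ring_scope.

Local Open Scope ring_scope.

Section S.
Variable R : realType.

Definition pts (k : nat) : R := (k.+2)%:R^-1.

Lemma pts_ge0 k : 0 <= pts k.
Proof. by rewrite /pts invr_ge0 ler0n. Qed.

Lemma pts_le k : pts k <= 2^-1.
Proof.
rewrite /pts lef_pV2 ?posrE ?ltr0n // ler_nat //.
Qed.

Lemma pts_inj : injective pts.
Proof.
move=> a b /invr_inj /eqP; rewrite eqr_nat => /eqP [] //.
Qed.

Lemma poly_pts_eq0 (P : {poly R}) : (forall k, P.[pts k] = 0) -> P = 0.
Proof.
move=> H; apply: (@roots_geq_poly_eq0 _ _ (map pts (iota 0 (size P)))).
- by apply/allP => t /mapP [k _ ->]; rewrite /root H.
- by rewrite map_inj_uniq ?iota_uniq //; apply: pts_inj.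
- by rewrite size_map size_iota.
Qed.

Definition pt2 (u v : R) : 'I_2 -> R := fun i => if val i == 0%N then u else v.

Lemma meval2 (q : {mpoly R[2]}) u v :
  q.@[pt2 u v] = \sum_(m <- msupp q) q@_m * (u ^+ m 0 * v ^+ m 1).
Proof. rewrite mevalE; apply: eq_bigr => m _; rewrite !big_ord_recr big_ord0 /= mul1r /pt2 /=.
by congr (_ * (_ ^+ m _ * _ ^+ m _)); apply: val_inj. Qed.

Lemma mcoeff_sumE (q : {mpoly R[2]}) m0 :
  q@_m0 = \sum_(m <- msupp q) q@_m * ((m 0 == m0 0)%:R * (m 1 == m0 1)%:R).
Proof.
rewrite {1}(mpolyE q) raddf_sum /=; apply: eq_bigr => m _.
rewrite mcoeffZ mcoeffX; congr (_ * _); rewrite -natrM mulnb; congr ((nat_of_bool _)%:R).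
apply/eqP/andP => [->|[/eqP h0 /eqP h1]]; first by [].
apply/mnmP => i; case: i => [[|[|//]] ?].
  by rewrite (_ : Ordinal _ = 0) //; apply: val_inj.
by rewrite (_ : Ordinal _ = 1) //; apply: val_inj.
Qed.

Lemma mpoly2_eq0 (q : {mpoly R[2]}) :
  (forall a b, q.@[pt2 (pts a) (pts b)] = 0) -> q = 0.
Proof.
move=> H.
have P0 b : \sum_(m <- msupp q) (q@_m * pts b ^+ m 1) *: 'X^(m 0) = 0 :> {poly R}.
  apply: poly_pts_eq0 => a; rewrite -(H a b) meval2 horner_sum.
  apply: eq_bigr => m _; rewrite hornerZ hornerXn; ring.
have Q0 k : \sum_(m <- msupp q) (q@_m * (m 0 == k)%:R) *: 'X^(m 1) = 0 :> {poly R}.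
  apply: poly_pts_eq0 => b.
  have := congr1 (fun P : {poly R} => P`_k) (P0 b).
  rewrite coef0 coef_sum => h; apply: etrans h.
  rewrite horner_sum; apply: eq_bigr => m _.
  rewrite hornerZ hornerXn coefZ coefXn eq_sym; ring.
apply/mpolyP => m0; rewrite mcoeff0 mcoeff_sumE.
have := congr1 (fun P : {poly R} => P`_(m0 1)) (Q0 (m0 0)).
rewrite coef0 coef_sum => h; apply: etrans h.
apply: eq_bigr => m _.
rewrite coefZ coefXn [m0 1 == _]eq_sym; ring.
Qed.

Local Notation X0 := ('X_(0 : 'I_2) : {mpoly R[2]}).
Local Notation X1 := ('X_(1 : 'I_2) : {mpoly R[2]}).

Lemma dX (i k : 'I_2) : ('X_i : {mpoly R[2]})^`M(k) = (i == k)%:R.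
Proof.
rewrite mderivX mnm1E; case: eqP => [->|_]; last by rewrite scale0r.
have -> : (U_(k) - U_(k))%MM = 0%MM by apply/mnmP => l; rewrite mnmBE subnn mnm0E.
by rewrite mpolyX0 scale1r.
Qed.

Lemma homogX (i : 'I_2) : ('X_i : {mpoly R[2]}) \is 1.-homog.
Proof. by rewrite dhomogX; apply/eqP; apply: mdeg1. Qed.

Lemma mderiv_homog {d} {p : {mpoly R[2]}} i :
  p \is d.-homog -> p^`M(i) \is d.-1.-homog.
Proof.
move=> /dhomogP h; apply/dhomogP => m; rewrite mcoeff_msupp mcoeff_mderiv => nz.
have : (m + U_(i))%MM \in msupp p.
  by rewrite mcoeff_msupp; apply: contra nz => /eqP ->; rewrite mul0rn.
move/h => <-; rewrite /=.
have -> : mdeg (m + U_(i))%MM = (mdeg m + 1)%N by rewrite mdegD mdeg1.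
by rewrite addn1.
Qed.

Lemma xy_eq0 (w : {mpoly R[2]}) : X0 * X1 * w = 0 -> w = 0.
Proof.
move=> h; apply/mpolyP => k; rewrite mcoeff0.
rewrite -(mcoeffMX w (U_((0%R : 'I_2)) + U_((1%R : 'I_2)))%MM k) mpolyXD.
by rewrite mulrC h mcoeff0.
Qed.

Lemma row_lemma j (u v : {mpoly R[2]}) :
  u \is j.-homog -> v \is j.-homog ->
  (bubble R * u)^`M(0) + (bubble R * v)^`M(1) = 0 ->
  X0 * X1 * (u + v) = 0 /\ (X0 * X1 * u)^`M(0) + (X0 * X1 * v)^`M(1) = 0.
Proof.
move=> hu hv h.
set F := X0 * X1 * u; set G := X0 * X1 * v.
set A := F^`M(0) + G^`M(1).
set B := ((X0 + X1) * F)^`M(0) + ((X0 + X1) * G)^`M(1).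
have eb w : bubble R * w = X0 * X1 * w - (X0 + X1) * (X0 * X1 * w).
  rewrite /bubble; ring.
have hAB : A - B = 0.
  by rewrite -h !eb !mderivB /A /B /F /G; ring.
have eB : B = (X0 + X1) * A + F + G.
  rewrite /B /A !mderivM !mderivD !dX /=; ring.
have hxy : X0 * X1 \is (1 + 1).-homog := dhomogM (homogX 0) (homogX 1).
have hF : F \is (2 + j).-homog := dhomogM hxy hu.
have hG : G \is (2 + j).-homog := dhomogM hxy hv.
have hA : A \is (2 + j).-1.-homog.
  have := dhomogD (mderiv_homog 0 hF) (mderiv_homog 1 hG). exact.
have hs : X0 + X1 \is 1.-homog := dhomogD (homogX 0) (homogX 1).
have hB : B \is (1 + (2 + j)).-1.-homog.
  exact: dhomogD (mderiv_homog 0 (dhomogM hs hF)) (mderiv_homog 1 (dhomogM hs hG)).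
have eAB : A = B by apply/eqP; rewrite -subr_eq0; apply/eqP.
have A0 : A = 0.
  apply/eqP; apply/negP => /negP nz.
  rewrite eAB in hA nz; have := dhomog_uniq nz hA hB; lia.
split=> //.
have : B = 0 by rewrite -eAB.
by rewrite eB A0 mulr0 add0r /F /G -mulrDr.
Qed.

Lemma xy_deriv (c : {mpoly R[2]}) :
  (X0 * X1 * c)^`M(0) = (X0 * X1 * c)^`M(1) -> c = 0.
Proof.
move=> h; apply: xy_eq0.
set q := X0 * X1 * c.
have qE : q = c * 'X_[(U_((0%R : 'I_2)) + U_((1%R : 'I_2)))%MM].
  by rewrite mpolyXD /q mulrC.
suff H : forall (k : nat) (m : 'X_{1..2}), m (0 : 'I_2) = k -> q@_m = 0.
  by apply/mpolyP => m; rewrite mcoeff0 (H (m 0)).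
elim=> [|k IH] m hm.
  rewrite qE mcoeffM big1 // => [[k1 k2]] /= /eqP e.
  rewrite mcoeffX; case: eqP => [e2|_]; last by rewrite mulr0.
  have hm' := hm; rewrite e -e2 !mnmDE !mnm1E /= in hm'.
  by move: hm'; rewrite addn0 addn1.
pose m' := (m - U_((0%R : 'I_2)))%MM.
have em : m = (m' + U_((0%R : 'I_2)))%MM.
  apply/mnmP => i; rewrite mnmDE mnmBE mnm1E.
  by case: eqP => [<-|_]; rewrite ?hm ?subn0 ?addn0 // subn1 addn1.
have := congr1 (mcoeff m') h; rewrite !mcoeff_mderiv -em.
rewrite (IH (m' + U_((1%R : 'I_2)))%MM); last by rewrite mnmDE mnm1E /= addn0 /m' mnmBE hm mnm1E subn1.
rewrite mul0rn => /eqP; rewrite mulrn_eq0 /= => /eqP //.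
Qed.

End S.

Lemma ord2_cases (i : 'I_2) : i = 0 \/ i = 1.
Proof. by case: i => [[|[|//]] hi]; [left|right]; apply: val_inj. Qed.

Theorem lemma4p5 (R : realType) (j : nat) (p : 'M[{mpoly R[2]}]_2) :
  (1 <= j)%N ->
  p^T = p ->
  (forall i k : 'I_2, p i k \is j.-homog) ->
  (forall (x : 'I_2 -> R), in_ref_triangle x ->
     forall i : 'I_2, (mxdiv (map_mx (fun q => bubble R * q) p) i).@[x] = 0) ->
  map_mx (fun q => bubble R * q) p = 0.
Proof.
move=> _ hT hh H.
have D i : (bubble R * p i 0)^`M(0) + (bubble R * p i 1)^`M(1) = 0.
  have -> : (bubble R * p i 0)^`M(0) + (bubble R * p i 1)^`M(1)
          = mxdiv (map_mx (fun q => bubble R * q) p) i.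
    rewrite /mxdiv !big_ord_recr big_ord0 /= add0r !mxE.
    by congr ((bubble R * p i _)^`M(_) + (bubble R * p i _)^`M(_)); apply: val_inj.
  apply: mpoly2_eq0 => a b; apply: H.
  rewrite /in_ref_triangle /pt2 /=.
  have := pts_ge0 R a; have := pts_ge0 R b.
  have := pts_le R a; have := pts_le R b; lra.
have p10 : p 1 0 = p 0 1 by rewrite -{1}hT mxE.
have [s0 d0] := @row_lemma R j _ _ (hh 0 0) (hh 0 1) (D 0).
have := D 1; rewrite p10 => D1.
have [s1 _] := @row_lemma R j _ _ (hh 0 1) (hh 1 1) D1.
have ea : p 0 0 = - p 0 1.
  by apply/eqP; rewrite -subr_eq0 opprK; apply/eqP; apply: xy_eq0.
have ed : p 1 1 = - p 0 1.
  by apply/eqP; rewrite -subr_eq0 opprK addrC; apply/eqP; apply: xy_eq0.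
have c0 : p 0 1 = 0.
  apply: xy_deriv; apply/eqP; rewrite -subr_eq0.
  rewrite ea mulrN mderivN in d0.
  by rewrite -oppr_eq0 opprB addrC d0.
apply/matrixP => i k; rewrite !mxE.
have -> : p i k = 0.
  by case: (ord2_cases i) => ->; case: (ord2_cases k) => ->;
     rewrite ?ea ?ed ?p10 c0 ?oppr0.
by rewrite mulr0.
Qed.
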